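(* Let $q>0$, let $f$ be a $q$-concave function on $\mathbb R^n$ which is not $m$-isolated, for some $1\le m\le n$. If there exists an $m$-Dynkin vector for $f$, then $C(f)\ne\varnothing$.
   Context: A twice differentiable $f:\mathbb R^n\to\mathbb R$ is $q$-concave if $\frac{\partial f}{\partial x_i}(0)=0$ for all $i$, $\frac{\partial^2 f}{\partial x_i\partial x_j}\ge0$ everywhere for all $i,j$, and $\frac{\partial^2 f}{\partial x_i^2}\ge q$ everywhere for all $i$. With $e_m$ the $m$-th standard basis vector, $f$ is $m$-isolated if $\frac{\partial f}{\partial x_k}(e_m)=0$ for all $k\ne m$. A nonzero $d\in\mathbb Z^n$ is an $m$-Dynkin vector for $f$ if $0\le\frac{\partial f}{\partial x_m}(d)\le q$ and $\frac{\partial f}{\partial x_j}(d)=0$ for all $j\ne m$. $H_n=\{x:\sum x_i=0\}$; $C(f)$ is the set of $h\in H_n\setminus\{0\}$ with either all $\partial f/\partial x_i(h)\le0$ or all $\ge0$. *)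

(* Defs.v *)
From HB Require Import structures.
From mathcomp Require Import all_boot all_order all_algebra.
From mathcomp Require Import all_classical all_reals all_analysis.
Set Implicit Arguments. Unset Strict Implicit. Unset Printing Implicit Defensive.
Import Order.TTheory GRing.Theory Num.Theory.
Import numFieldNormedType.Exports.
Local Open Scope ring_scope.

Section Defs.
Variables (R : realType) (n : nat).

Definition ebasis (i : 'I_n) : 'rV[R]_n := delta_mx 0 i.

Definition pderiv (f : 'rV[R]_n -> R) (i : 'I_n) (x : 'rV[R]_n) : R :=
  'D_(ebasis i) f x.

Definition twice_differentiable (f : 'rV[R]_n -> R) : Prop :=
  (forall x, differentiable f x) /\
  (forall i x, differentiable (pderiv f i) x).

Definition q_concave (q : R) (f : 'rV[R]_n -> R) : Prop :=
  [/\ (forall i, pderiv f i 0 = 0),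
      (forall i j x, 0 <= pderiv (pderiv f j) i x) &
      (forall i x, q <= pderiv (pderiv f i) i x)].

Definition m_isolated (m : 'I_n) (f : 'rV[R]_n -> R) : Prop :=
  forall k : 'I_n, k != m -> pderiv f k (ebasis m) = 0.

Definition int_vec (d : 'rV[int]_n) : 'rV[R]_n := map_mx (fun z => z%:~R) d.

Definition dynkin_vector (m : 'I_n) (q : R) (f : 'rV[R]_n -> R)
  (d : 'rV[int]_n) : Prop :=
  [/\ d != 0,
      0 <= pderiv f m (int_vec d) <= q &
      (forall j : 'I_n, j != m -> pderiv f j (int_vec d) = 0)].

Definition in_H (x : 'rV[R]_n) : Prop := \sum_(i < n) x 0 i = 0.

Definition in_C (f : 'rV[R]_n -> R) (h : 'rV[R]_n) : Prop :=
  [/\ in_H h, h != 0 &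
      ((forall i, pderiv f i h <= 0) \/ (forall i, 0 <= pderiv f i h))].

End Defs.

(* Main.v *)
Require Import Defs.
From HB Require Import structures.
From mathcomp Require Import all_boot all_order all_algebra.
From mathcomp Require Import all_classical all_reals all_analysis.
Import Order.TTheory GRing.Theory Num.Theory.
Import numFieldNormedType.Exports.
Local Open Scope ring_scope.
From mathcomp Require Import zify lra.
Section K.
Variables (R : realType) (n : nat).

Lemma line_quot (g : 'rV[R]_n -> R) (x v : 'rV[R]_n) (t : R) :
  (fun h : R => h^-1 *: (((fun s : R => g (x + s *: v)) \o shift t) (h *: 1)
      - g (x + t *: v))) =
  (fun h : R => h^-1 *: ((g \o shift (x + t *: v)) (h *: v) - g (x + t *: v))).
Proof.
apply/funext => h /=; congr (_ *: (g _ - _)).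
rewrite /= (_ : h%:A = h); last by rewrite /GRing.scale /= mulr1.
by rewrite scalerDl addrCA addrA.
Qed.

Lemma line_derivable (g : 'rV[R]_n -> R) (x v : 'rV[R]_n) (t : R) :
  derivable g (x + t *: v) v -> derivable (fun s : R => g (x + s *: v)) t 1.
Proof. by rewrite /derivable line_quot. Qed.

Lemma line_derive (g : 'rV[R]_n -> R) (x v : 'rV[R]_n) (t : R) :
  'D_1 (fun s : R => g (x + s *: v)) t = 'D_v g (x + t *: v).
Proof. by rewrite /derive line_quot. Qed.

Lemma mono_dir (g : 'rV[R]_n -> R) (v x : 'rV[R]_n) (c : R) :
  (forall y, differentiable g y) -> (forall y, c <= 'D_v g y) ->
  forall a b, a <= b -> g (x + a *: v) + c * (b - a) <= g (x + b *: v).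
Proof.
move=> dg cle a b ab.
pose psi := fun s : R => g (x + s *: v).
have dpsi : forall t, derivable psi t 1.
  by move=> t; apply: line_derivable; apply: diff_derivable.
have := @MVT_segment R psi (fun t => 'D_v g (x + t *: v)) a b ab.
case.
- move=> t _; rewrite -line_derive; exact: derivableP.
- apply: continuous_subspaceT => t.
  apply: differentiable_continuous; exact/derivable1_diffP.
move=> c0 _ E.
rewrite -lerBrDl -/(psi b) -/(psi a) E.
by rewrite ler_wpM2r // subr_ge0.
Qed.
End K.

Theorem lemma3 (R : realType) (n : nat) (q : R) (f : 'rV[R]_n -> R)
  (m : 'I_n) :
  0 < q ->
  twice_differentiable f ->
  q_concave q f ->
  ~ m_isolated m f ->
  (exists d : 'rV[int]_n, dynkin_vector m q f d) ->
  exists h : 'rV[R]_n, in_C f h.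
Proof.
move=> q0 [df ddf] [f0 Hij Hii] niso [d [dn0 /andP[Dm0 Dmq] Dj]].
set e := ebasis R m.
set D := int_vec R d.
pose s := \sum_(i < n) D 0 i.
have mono : forall j c x a b, (forall y, c <= pderiv (pderiv f j) m y) ->
    a <= b -> pderiv f j (x + a *: e) + c * (b - a) <= pderiv f j (x + b *: e).
  by move=> j c x a b hc ab; exact: mono_dir (ddf j) hc a b ab.
have mono0 j x a b : a <= b -> pderiv f j (x + a*:e) <= pderiv f j (x + b*:e).
  by move=> ab; have := mono j 0 x a b (fun y => Hij m j y) ab; rewrite mul0r addr0.
have monoq x a b : a <= b ->
    pderiv f m (x + a*:e) + q*(b-a) <= pderiv f m (x + b*:e).
  exact: mono m q x a b (fun y => Hii m y).
have sint : s = (\sum_(i<n) d 0 i)%:~R.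
  rewrite /s /D /int_vec rmorph_sum /=; apply: eq_bigr => i _; by rewrite mxE.
have esum : \sum_(i<n) e 0 i = 1.
  rewrite (bigD1 m) //= big1 => [|i im]; rewrite /e /ebasis mxE ?eqxx ?addr0 //.
  by rewrite (negbTE im).
pose h := D - s *: e.
have hH : in_H h.
  rewrite /in_H /h (eq_bigr (fun i => D 0 i - s * e 0 i)); last by move=> i _; rewrite !mxE.
  by rewrite sumrB -mulr_sumr esum mulr1 subrr.
have hD : h + s *: e = D by rewrite /h subrK.
have h0 : h + 0 *: e = h by rewrite scale0r addr0.
have x0 : forall a : R, (0 : 'rV[R]_n) + a *: e = a *: e by move=> a; rewrite add0r.
set z := \sum_(i<n) d 0 i in sint.
have [zneg|zpos|zz] := ltrgtP z 0.
- have sle : s <= -1.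
    have : z <= -1 by lia.
    by rewrite sint -(ler_int R) => ->.
  exists h; split => //.
  + apply/eqP => hz; have Ds : D = s *: e by rewrite -hD hz add0r.
    have := monoq 0 s 0 (le_trans sle (lerN10 _)).
    rewrite !x0 scale0r -Ds f0 sub0r.
    have : q * - s >= q by rewrite ler_peMr //; lra.
    lra.
  + right => i; have [->|im] := eqVneq i m.
      have := monoq h s 0 (le_trans sle (lerN10 _)); rewrite hD h0.
      have : 0 <= q * (0 - s) by rewrite mulr_ge0 // ?ltW //; lra.
      lra.
    have := mono0 i h s 0 (le_trans sle (lerN10 _)); rewrite hD h0 Dj //.
- have sge : 1 <= s.
    have : 1 <= z by lia.
    by rewrite sint -(ler_int R) => ->.
  exists h; split => //.
  + apply/eqP => hz; have Ds : D = s *: e by rewrite -hD hz add0r.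
    apply: niso => k km.
    have := mono0 k 0 0 1 ler01; have := mono0 k 0 1 s sge.
    rewrite !x0 scale0r -Ds f0 Dj // scale1r; lra.
  + left => i; have [->|im] := eqVneq i m.
      have := monoq h 0 s (le_trans ler01 sge); rewrite hD h0.
      have : q <= q * (s - 0) by rewrite subr0 ler_peMr // ltW.
      lra.
    have := mono0 i h 0 s (le_trans ler01 sge); rewrite hD h0 Dj //.
- have s0 : s = 0 by rewrite sint zz.
  have hD' : h = D by rewrite /h s0 scale0r subr0.
  exists h; split => //.
  + rewrite hD'; apply: contra dn0 => /eqP D0; apply/eqP/matrixP => i j.
    have := congr1 (fun M : 'rV[R]_n => M i j) D0.
    rewrite /D /int_vec !mxE => /eqP; rewrite intr_eq0 => /eqP ->; by [].
  + right => i; rewrite hD'; have [->|im] := eqVneq i m => //.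
    by rewrite Dj.
Qed.
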